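(* Let $R$ be a Boolean algebra, $P(x_1,\ldots,x_n)$ a Boolean polynomial, $W$ a set and $w_1,\ldots,w_n\in W$. Then $G_P^W[w_1,\ldots,w_n](R)$ is an open subset of $(G(R)^W)^n$, and $G_P(R)$ is an open subset of $G(R)^n$.
   Context: Identify the family $2^R$ of all subsets of $R$ with $\{0,1\}^R$ with the product topology. $G(R)=\{(I^-,I^+)\in2^R\times2^R: I^-\text{ is an ideal of }R,\ I^+\text{ is a filter of }R,\ a\le b\text{ for all }a\in I^-,b\in I^+\}$, with the subspace topology; powers of $G(R)$ carry the product topology. $G_P(R)\subseteq G(R)^n$ is the set of all $((I_1^-,I_1^+),\ldots,(I_n^-,I_n^+))$ for which there exist $r_1^-,r_1^+,\ldots,r_n^-,r_n^+$ with $r_i^\varepsilon\in I_i^\varepsilon$ for all $i$ and $\varepsilon\in\{+,-\}$ and $P(r_1^{\varepsilon_1},\ldots,r_n^{\varepsilon_n})=0$ for every choice of signs $\varepsilon_i\in\{+,-\}$. $G_P^W[w_1,\ldots,w_n](R)\subseteq(G(R)^W)^n$ is the set of all $n$-tuples $\big((I_w^-(1),I_w^+(1))_{w\in W},\ldots,(I_w^-(n),I_w^+(n))_{w\in W}\big)$ for which there exist $r_1^-,r_1^+,\ldots,r_n^-,r_n^+$ with $r_i^\varepsilon\in I_{w_i}^\varepsilon(i)$ for all $i,\varepsilon$ and $P(r_1^{\varepsilon_1},\ldots,r_n^{\varepsilon_n})=0$ for every choice of signs $\varepsilon_i\in\{+,-\}$. *)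

(* Defs.v *)
From HB Require Import structures.
From mathcomp Require Import all_boot all_order all_algebra.
From mathcomp Require Import all_classical all_reals all_analysis.

Set Implicit Arguments.
Unset Strict Implicit.
Unset Printing Implicit Defensive.

Local Open Scope classical_set_scope.

(* A Boolean algebra is a complemented distributive lattice with top and
   bottom: [ctbDistrLatticeType d]. *)

Inductive bpoly (n : nat) : Type :=
  | BVar of 'I_n
  | BZero
  | BOne
  | BMeet of bpoly n & bpoly n
  | BJoin of bpoly n & bpoly n
  | BCompl of bpoly n.

Fixpoint bpoly_eval d (R : ctbDistrLatticeType d) (n : nat)
    (P : bpoly n) (x : 'I_n -> R) : R :=
  match P with
  | BVar i => x i
  | BZero => Order.bottom
  | BOne => Order.top
  | BMeet p q => Order.meet (bpoly_eval p x) (bpoly_eval q x)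
  | BJoin p q => Order.join (bpoly_eval p x) (bpoly_eval q x)
  | BCompl p => Order.compl (bpoly_eval p x)
  end.

(* 2^R identified with {0,1}^R, with the product topology. *)
Definition Pow2 d (R : ctbDistrLatticeType d) := {ptws R -> bool}.

Definition is_ideal d (R : ctbDistrLatticeType d) (I : R -> bool) : Prop :=
  [/\ exists a, I a,
      (forall a b, (b <= a)%O -> I a -> I b) &
      (forall a b, I a -> I b -> I (Order.join a b))].

Definition is_filter d (R : ctbDistrLatticeType d) (I : R -> bool) : Prop :=
  [/\ exists a, I a,
      (forall a b, (a <= b)%O -> I a -> I b) &
      (forall a b, I a -> I b -> I (Order.meet a b))].

Definition Gset d (R : ctbDistrLatticeType d) : set (Pow2 R * Pow2 R) :=
  [set I | is_ideal (I.1 : R -> bool) /\ is_filter (I.2 : R -> bool) /\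
           forall a b : R, (I.1 : R -> bool) a -> (I.2 : R -> bool) b -> (a <= b)%O].

Definition GR d (R : ctbDistrLatticeType d) := set_type (@Gset d R).

Definition Iminus d (R : ctbDistrLatticeType d) (I : GR R) : R -> bool :=
  (set_val I).1.
Definition Iplus d (R : ctbDistrLatticeType d) (I : GR R) : R -> bool :=
  (set_val I).2.

(* r_i^{eps_i}: eps i = true selects r_i^+, false selects r_i^-. *)
Definition sgn_pick d (R : ctbDistrLatticeType d) n
    (rm rp : 'I_n -> R) (eps : 'I_n -> bool) : 'I_n -> R :=
  fun i => if eps i then rp i else rm i.

Definition GP d (R : ctbDistrLatticeType d) n (P : bpoly n) :
    set {ptws 'I_n -> GR R} :=
  [set I | exists rm rp : 'I_n -> R,
     (forall i, Iminus (I i) (rm i) /\ Iplus (I i) (rp i)) /\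
     forall eps : 'I_n -> bool,
       bpoly_eval P (sgn_pick rm rp eps) = Order.bottom].

Definition GPW d (R : ctbDistrLatticeType d) n (P : bpoly n) (W : Type)
    (w : 'I_n -> W) : set {ptws 'I_n -> {ptws W -> GR R}} :=
  [set I | exists rm rp : 'I_n -> R,
     (forall i, Iminus (I i (w i)) (rm i) /\ Iplus (I i (w i)) (rp i)) /\
     forall eps : 'I_n -> bool,
       bpoly_eval P (sgn_pick rm rp eps) = Order.bottom].

(* Main.v *)
Require Import Defs.
From HB Require Import structures.
From mathcomp Require Import all_boot all_order all_algebra.
From mathcomp Require Import all_classical all_reals all_analysis.
Local Open Scope classical_set_scope.

Section S.
Context (d : Order.disp_t) (R : ctbDistrLatticeType d).

Lemma setval_cont : continuous (@set_val _ (@Gset d R) : GR R -> Pow2 R * Pow2 R).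
Proof. exact: initial_continuous. Qed.

Lemma fst_cont (X Y : topologicalType) : continuous (@fst X Y).
Proof. move=> x; exact: cvg_fst. Qed.

Lemma snd_cont (X Y : topologicalType) : continuous (@snd X Y).
Proof. move=> x; exact: cvg_snd. Qed.

Lemma ev_cont (r : R) : continuous (fun f : Pow2 R => f r).
Proof. exact: (@proj_continuous R (fun _ => bool) r). Qed.

Lemma Iminus_cont (T : topologicalType) (f : T -> GR R) r :
  continuous f -> continuous (fun x => Iminus (f x) r).
Proof.
move=> fc x.
apply: (@continuous_comp _ _ _ f (fun I => Iminus I r) x (fc x)).
apply: (@continuous_comp _ _ _ (fun I : GR R => (set_val I).1) (fun g : Pow2 R => g r)); last exact: ev_cont.
apply: (@continuous_comp _ _ _ (@set_val _ (@Gset d R)) fst); first exact: setval_cont.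
exact: fst_cont.
Qed.

Lemma Iplus_cont (T : topologicalType) (f : T -> GR R) r :
  continuous f -> continuous (fun x => Iplus (f x) r).
Proof.
move=> fc x.
apply: (@continuous_comp _ _ _ f (fun I => Iplus I r) x (fc x)).
apply: (@continuous_comp _ _ _ (fun I : GR R => (set_val I).2) (fun g : Pow2 R => g r)); last exact: ev_cont.
apply: (@continuous_comp _ _ _ (@set_val _ (@Gset d R)) snd); first exact: setval_cont.
exact: snd_cont.
Qed.

Lemma open_true (T : topologicalType) (f : T -> bool) : continuous f -> open [set x | f x].
Proof.
move=> fc; have -> : [set x | f x] = f @^-1` [set true].
  by apply/seteqP; split => x /=.
apply: open_comp; first by move=> x _; exact: fc.
exact: discrete_open.
Qed.

Lemma evW_cont (W : Type) (t : W) :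
  continuous (fun g : {ptws W -> GR R} => g t).
Proof. exact: (@proj_continuous {classic W} (fun _ => GR R) t). Qed.

Lemma evI_cont n (X : topologicalType) (i : 'I_n) :
  continuous (fun g : {ptws 'I_n -> X} => g i).
Proof. exact: (@proj_continuous 'I_n (fun _ => X) i). Qed.

End S.

Theorem lemma4p3 (d : Order.disp_t) (R : ctbDistrLatticeType d) (n : nat)
    (P : bpoly n) (W : Type) (w : 'I_n -> W) :
  open (@GPW d R n P W w) /\ open (@GP d R n P).
Proof.
split.
- rewrite openE => I [rm [rp [Hin Hev]]].
  have cJ : forall i, continuous (fun J : {ptws 'I_n -> {ptws W -> GR R}} => J i (w i)).
    move=> i x.
    apply: (@continuous_comp _ _ _ (fun J : {ptws 'I_n -> {ptws W -> GR R}} => J i)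
              (fun g : {ptws W -> GR R} => g (w i)) x).
      exact: evI_cont.
    exact: evW_cont.
  have h1 : \forall J \near I, forall i : 'I_n, Iminus (J i (w i)) (rm i).
    apply: (@filter_forall _ 'I_n (fun i J => is_true (Iminus (J i (w i)) (rm i))) (nbhs I) _) => i.
    apply: open_nbhs_nbhs; split; last by case: (Hin i).
    exact/open_true/Iminus_cont/cJ.
  have h2 : \forall J \near I, forall i : 'I_n, Iplus (J i (w i)) (rp i).
    apply: (@filter_forall _ 'I_n (fun i J => is_true (Iplus (J i (w i)) (rp i))) (nbhs I) _) => i.
    apply: open_nbhs_nbhs; split; last by case: (Hin i).
    exact/open_true/Iplus_cont/cJ.
  apply: filterS2 h1 h2 => J H1 H2; exists rm, rp; split => // i.
- rewrite openE => I [rm [rp [Hin Hev]]].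
  have cJ : forall i, continuous (fun J : {ptws 'I_n -> GR R} => J i).
    move=> i; exact: evI_cont.
  have h1 : \forall J \near I, forall i : 'I_n, Iminus (J i) (rm i).
    apply: (@filter_forall _ 'I_n (fun i J => is_true (Iminus (J i) (rm i))) (nbhs I) _) => i.
    apply: open_nbhs_nbhs; split; last by case: (Hin i).
    exact/open_true/Iminus_cont/cJ.
  have h2 : \forall J \near I, forall i : 'I_n, Iplus (J i) (rp i).
    apply: (@filter_forall _ 'I_n (fun i J => is_true (Iplus (J i) (rp i))) (nbhs I) _) => i.
    apply: open_nbhs_nbhs; split; last by case: (Hin i).
    exact/open_true/Iplus_cont/cJ.
  apply: filterS2 h1 h2 => J H1 H2; exists rm, rp; split => // i.
Qed.
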